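(* Let $H$ be a quasitriangular Hopf algebra over $\mathbb{C}$ with quasitriangular structure $\mathcal{R}\in H\otimes H$, and $A$ a Hopf algebra non-degenerately paired with $H$, such that $H$ is factorisable, i.e. the map $\mathcal{Q}:A\to H$, $\mathcal{Q}(a)=(a\otimes{\rm id})(\mathcal{R}_{21}\mathcal{R})$, is a linear isomorphism. Then $\mathcal{Q}$ restricts to a linear isomorphism $\ker\epsilon\subset A\to\ker\epsilon\subset H$, and it intertwines the action of the quantum double $H\bowtie A^{\rm op}$ on $\ker\epsilon\subset A$ given by \[h\triangleright a=a_{(2)}\langle h,(Sa_{(1)})a_{(3)}\rangle,\qquad b\triangleright a=\langle b,\mathcal{R}'^{(1)}\mathcal{R}^{(2)}\rangle\langle a_{(1)},\mathcal{R}'^{(2)}\rangle\langle a_{(3)},\mathcal{R}^{(1)}\rangle a_{(2)}-\langle b,\mathcal{Q}(a)\rangle1\] ($h\in H$, $b\in A$) with the action on $\ker\epsilon\subset H$ given by $h\triangleright x=h_{(1)}xSh_{(2)}$, $b\triangleright x=\langle b,x_{(1)}\rangle x_{(2)}-\langle b,x\rangle1$. In particular, the quantum double subrepresentations of $\ker\epsilon\subset H$ (quantum tangent spaces) are exactly the images under $\mathcal{Q}$ of the subrepresentations of $\ker\epsilon\subset A$ under the first action.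
   Context: Hopf pairing conventions: $\langle hg,a\rangle=\langle h,a_{(1)}\rangle\langle g,a_{(2)}\rangle$, $\langle h,ab\rangle=\langle h_{(1)},a\rangle\langle h_{(2)},b\rangle$, compatible with units, counits, antipodes; Sweedler notation. Quasitriangular: $\mathcal{R}=\mathcal{R}^{(1)}\otimes\mathcal{R}^{(2)}$ invertible with $(\Delta\otimes{\rm id})\mathcal{R}=\mathcal{R}_{13}\mathcal{R}_{23}$, $({\rm id}\otimes\Delta)\mathcal{R}=\mathcal{R}_{13}\mathcal{R}_{12}$, $\Delta^{\rm op}h=\mathcal{R}(\Delta h)\mathcal{R}^{-1}$; $\mathcal{R}'$ denotes a second copy of $\mathcal{R}$; $\mathcal{R}_{21}=\mathcal{R}^{(2)}\otimes\mathcal{R}^{(1)}$. Quantum double $H\bowtie A^{\rm op}$: $H\otimes A$ with product $(h\otimes a)(g\otimes b)=hg_{(2)}\otimes ba_{(2)}\langle g_{(1)},a_{(1)}\rangle\langle g_{(3)},Sa_{(3)}\rangle$. *)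

(* Defs.v *)
(* Tensors are represented by finite lists of pure tensors; two tensors are
   equal iff every multilinear form (into C) takes the same value on them. *)
From HB Require Import structures.
From mathcomp Require Import all_boot all_order all_algebra.
From mathcomp Require Import reals Rstruct.
From mathcomp Require Import complex.
Set Implicit Arguments. Unset Strict Implicit. Unset Printing Implicit Defensive.
Import Order.TTheory GRing.Theory Num.Theory.
Local Open Scope ring_scope.

Definition CC : fieldType := complex Rdefinitions.R.

Section Tensors.
Variables U V W : lmodType CC.

Definition bilin (f : U -> V -> CC) : Prop :=
  (forall a u u' v, f (a *: u + u') v = a * f u v + f u' v) /\
  (forall a u v v', f u (a *: v + v') = a * f u v + f u v').

Definition trilin (f : U -> V -> W -> CC) : Prop :=
  (forall a u u' v w, f (a *: u + u') v w = a * f u v w + f u' v w) /\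
  (forall a u v v' w, f u (a *: v + v') w = a * f u v w + f u v' w) /\
  (forall a u v w w', f u v (a *: w + w') = a * f u v w + f u v w').

Definition teq2 (s t : seq (U * V)) : Prop :=
  forall f, bilin f ->
    \sum_(p <- s) f p.1 p.2 = \sum_(p <- t) f p.1 p.2.

Definition teq3 (s t : seq (U * V * W)) : Prop :=
  forall f, trilin f ->
    \sum_(p <- s) f p.1.1 p.1.2 p.2 = \sum_(p <- t) f p.1.1 p.1.2 p.2.
End Tensors.

Record HopfStr (H : algType CC) := {
  cop : H -> seq (H * H);
  eps : H -> CC;
  anti : H -> H }.

Section Hopf.
Variable H : algType CC.
Variable hs : HopfStr H.

Local Notation D := (cop hs).
Local Notation e := (eps hs).
Local Notation S := (anti hs).

Definition tmul2 (s t : seq (H * H)) : seq (H * H) :=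
  [seq (p.1 * q.1, p.2 * q.2) | p <- s, q <- t].

Definition cop3 (x : H) : seq (H * H * H) :=
  [seq (q.1, q.2, p.2) | p <- D x, q <- D p.1].

Definition is_hopf : Prop :=
  [/\ [/\ (forall a x y, teq2 (D (a *: x + y))
                          ([seq (a *: p.1, p.2) | p <- D x] ++ D y)),
      (forall x y, teq2 (D (x * y)) (tmul2 (D x) (D y))),
      teq2 (D 1) [:: (1, 1)] &
      (forall x, teq3 (cop3 x) [seq (p.1, q.1, q.2) | p <- D x, q <- D p.2])],
      [/\ (forall a x y, e (a *: x + y) = a * e x + e y),
          (forall x y, e (x * y) = e x * e y) & e 1 = 1],
      (forall x, \sum_(p <- D x) e p.1 *: p.2 = x /\
                 \sum_(p <- D x) e p.2 *: p.1 = x) &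
      [/\ (forall a x y, S (a *: x + y) = a *: S x + S y),
          (forall x, \sum_(p <- D x) S p.1 * p.2 = e x *: 1) &
          (forall x, \sum_(p <- D x) p.1 * S p.2 = e x *: 1)] ].

Definition quasitriangular (R : seq (H * H)) : Prop :=
  [/\ (exists Rinv : seq (H * H),
        [/\ teq2 (tmul2 R Rinv) [:: (1, 1)],
            teq2 (tmul2 Rinv R) [:: (1, 1)] &
            forall h, teq2 [seq (p.2, p.1) | p <- D h]
                           (tmul2 (tmul2 R (D h)) Rinv)]),
      (* (Delta (x) id) R = R13 R23 *)
      teq3 [seq (q.1, q.2, p.2) | p <- R, q <- D p.1]
           [seq (p.1, q.1, p.2 * q.2) | p <- R, q <- R] &
      (* (id (x) Delta) R = R13 R12 *)
      teq3 [seq (p.1, q.1, q.2) | p <- R, q <- D p.2]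
           [seq (p.1 * q.1, q.2, p.2) | p <- R, q <- R] ].
End Hopf.

Section Pairing.
Variables H A : algType CC.
Variables (hH : HopfStr H) (hA : HopfStr A).
Variable pr : H -> A -> CC.

Definition hopf_pairing : Prop :=
  [/\ bilin pr,
      (forall h g a, pr (h * g) a = \sum_(q <- cop hA a) pr h q.1 * pr g q.2),
      (forall h a b, pr h (a * b) = \sum_(q <- cop hH h) pr q.1 a * pr q.2 b),
      ((forall a, pr 1 a = eps hA a) /\ (forall h, pr h 1 = eps hH h)) &
      (forall h a, pr (anti hH h) a = pr h (anti hA a))].

Definition nondegenerate_pairing : Prop :=
  (forall h, (forall a, pr h a = 0) -> h = 0) /\
  (forall a, (forall h, pr h a = 0) -> a = 0).

Variable R : seq (H * H).

(* Q(a) = (a (x) id)(R21 R) = sum <R^(2) R'^(1), a> R^(1) R'^(2) *)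
Definition Qmap (a : A) : H :=
  \sum_(p <- R) \sum_(q <- R) pr (p.2 * q.1) a *: (p.1 * q.2).

Definition actHA (h : H) (a : A) : A :=
  \sum_(t <- cop3 hA a) pr h (anti hA t.1.1 * t.2) *: t.1.2.

Definition actAA (b : A) (a : A) : A :=
  \sum_(p <- R) \sum_(q <- R) \sum_(t <- cop3 hA a)
      (pr (p.1 * q.2) b * pr p.2 t.1.1 * pr q.1 t.2) *: t.1.2
  - pr (Qmap a) b *: 1.

Definition actHH (h : H) (x : H) : H :=
  \sum_(p <- cop hH h) p.1 * x * anti hH p.2.

Definition actAH (b : A) (x : H) : H :=
  \sum_(p <- cop hH x) pr p.1 b *: p.2 - pr x b *: 1.

(* subrepresentations of the quantum double H |><| A^op (generated by H and
   A^op): linear subspaces of ker eps stable under both actions *)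
Definition subspace (T : lmodType CC) (V : T -> Prop) : Prop :=
  V 0 /\ forall c x y, V x -> V y -> V (c *: x + y).

Definition double_subrepA (V : A -> Prop) : Prop :=
  [/\ subspace V, (forall a, V a -> eps hA a = 0),
      (forall h a, V a -> V (actHA h a)) &
      (forall b a, V a -> V (actAA b a))].

Definition double_subrepH (W : H -> Prop) : Prop :=
  [/\ subspace W, (forall x, W x -> eps hH x = 0),
      (forall h x, W x -> W (actHH h x)) &
      (forall b x, W x -> W (actAH b x))].
End Pairing.

(* Main.v *)
Require Import Defs.
From HB Require Import structures.
From mathcomp Require Import all_boot all_order all_algebra.
From mathcomp Require Import ring.
Import GRing.Theory.
Set Implicit Arguments. Unset Strict Implicit. Unset Printing Implicit Defensive.
Local Open Scope ring_scope.

Definition linC (U : lmodType CC) (f : U -> CC) :=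
  forall a u u', f (a *: u + u') = a * f u + f u'.
Definition linmap (U V : lmodType CC) (f : U -> V) :=
  forall a u u', f (a *: u + u') = a *: f u + f u'.

Section LinC.
Variable U : lmodType CC.
Implicit Types f g : U -> CC.

Lemma linC0 f : linC f -> f 0 = 0.
Proof.
move=> hf; have E := hf 1 0 0; rewrite scale1r addr0 mul1r in E.
apply: (addIr (f 0)); rewrite add0r; exact: esym E.
Qed.
Lemma linCD f : linC f -> forall u u', f (u + u') = f u + f u'.
Proof. by move=> hf u u'; have := hf 1 u u'; rewrite scale1r mul1r. Qed.
Lemma linCZ f : linC f -> forall a u, f (a *: u) = a * f u.
Proof. by move=> hf a u; have := hf a u 0; rewrite addr0 (linC0 hf) addr0. Qed.
Lemma linCN f : linC f -> forall u, f (- u) = - f u.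
Proof. by move=> hf u; rewrite -scaleN1r (linCZ hf) mulN1r. Qed.
Lemma linCB f : linC f -> forall u u', f (u - u') = f u - f u'.
Proof. by move=> hf u u'; rewrite (linCD hf) (linCN hf). Qed.
Lemma linC_sum f : linC f -> forall (I : Type) (s : seq I) (P : pred I) (F : I -> U),
  f (\sum_(i <- s | P i) F i) = \sum_(i <- s | P i) f (F i).
Proof. move=> hf I s P F; exact: (big_morph f (linCD hf) (linC0 hf)). Qed.

Lemma linC_add f g : linC f -> linC g -> linC (fun x => f x + g x).
Proof. by move=> hf hg a u u'; rewrite hf hg; ring. Qed.
Lemma linC_sumF (I : Type) (s : seq I) (P : pred I) (F : I -> U -> CC) :
  (forall i, linC (F i)) -> linC (fun x => \sum_(i <- s | P i) F i x).
Proof.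
move=> hF a u u'; under eq_bigr do rewrite hF.
by rewrite big_split /= mulr_sumr.
Qed.
Lemma linC_scal c f : linC f -> linC (fun x => c * f x).
Proof. by move=> hf a u u'; rewrite hf; ring. Qed.
Lemma linC_scar f c : linC f -> linC (fun x => f x * c).
Proof. by move=> hf a u u'; rewrite hf; ring. Qed.
Lemma linC_cst0 : linC (fun _ : U => 0).
Proof. by move=> a u u'; ring. Qed.
Lemma linC_comp (V : lmodType CC) (m : U -> V) (f : V -> CC) :
  linmap m -> linC f -> linC (fun x => f (m x)).
Proof. by move=> hm hf a u u'; rewrite hm hf. Qed.
End LinC.

Section AlgLin.
Variable B : algType CC.
Lemma linmap_mulr (z : B) : linmap (fun x : B => x * z).
Proof. by move=> a u u'; rewrite mulrDl scalerAl. Qed.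
Lemma linmap_mull (z : B) : linmap (fun x : B => z * x).
Proof. by move=> a u u'; rewrite mulrDr scalerAr. Qed.
Lemma linC_mulr (f : B -> CC) z : linC f -> linC (fun x => f (x * z)).
Proof. move=> hf; exact: (linC_comp (linmap_mulr z) hf). Qed.
Lemma linC_mull (f : B -> CC) z : linC f -> linC (fun x => f (z * x)).
Proof. move=> hf; exact: (linC_comp (linmap_mull z) hf). Qed.
End AlgLin.

Lemma bilinP (U V : lmodType CC) (f : U -> V -> CC) :
  (forall v, linC (fun u => f u v)) -> (forall u, linC (f u)) -> bilin f.
Proof. by move=> h1 h2; split => *; [apply: h1 | apply: h2]. Qed.
Lemma bilin1 (U V : lmodType CC) (f : U -> V -> CC) : bilin f -> forall v, linC (fun u => f u v).
Proof. by case=> h1 h2 v a u u'; apply: h1. Qed.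
Lemma bilin2 (U V : lmodType CC) (f : U -> V -> CC) : bilin f -> forall u, linC (f u).
Proof. by case=> h1 h2 u a v v'; apply: h2. Qed.
Lemma trilinP (U V W : lmodType CC) (f : U -> V -> W -> CC) :
  (forall v w, linC (fun u => f u v w)) -> (forall u w, linC (fun v => f u v w)) ->
  (forall u v, linC (f u v)) -> trilin f.
Proof. by move=> h1 h2 h3; split; [|split] => *; [apply: h1 | apply: h2 | apply: h3]. Qed.

Section HopfL.
Variables (H : algType CC) (hs : HopfStr H).
Hypothesis hh : is_hopf hs.
Local Notation D := (cop hs).
Local Notation e := (eps hs).
Local Notation S := (anti hs).

Lemma eps_lin : linC e.
Proof. by case: hh => _ [h _ _] _ _. Qed.
Lemma epsM x y : e (x * y) = e x * e y.
Proof. by case: hh => _ [_ h _] _ _. Qed.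
Lemma eps1 : e 1 = 1.
Proof. by case: hh => _ [_ _ h] _ _. Qed.
Lemma counitL x : \sum_(p <- D x) e p.1 *: p.2 = x.
Proof. by case: hh => _ _ h _; case: (h x). Qed.
Lemma counitR x : \sum_(p <- D x) e p.2 *: p.1 = x.
Proof. by case: hh => _ _ h _; case: (h x). Qed.
Lemma S_lin : linmap S.
Proof. by case: hh => _ _ _ [h _ _]. Qed.
Lemma antiL x : \sum_(p <- D x) S p.1 * p.2 = e x *: 1.
Proof. by case: hh => _ _ _ [_ h _]. Qed.
Lemma antiR x : \sum_(p <- D x) p.1 * S p.2 = e x *: 1.
Proof. by case: hh => _ _ _ [_ _ h]. Qed.

Lemma D_lin (f : H -> H -> CC) : bilin f -> linC (fun z => \sum_(p <- D z) f p.1 p.2).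
Proof.
move=> hf a x y; case: hh => [[hZ _ _ _] _ _ _].
rewrite (hZ a x y f hf) big_cat /= big_map /= mulr_sumr.
by under eq_bigr do rewrite (linCZ (bilin1 hf _)).
Qed.
Lemma D_mul (f : H -> H -> CC) : bilin f -> forall x y,
  \sum_(p <- D (x * y)) f p.1 p.2 = \sum_(p <- D x) \sum_(q <- D y) f (p.1 * q.1) (p.2 * q.2).
Proof.
move=> hf x y; case: hh => [[_ hM _ _] _ _ _].
by rewrite (hM x y f hf) /tmul2 big_allpairs_dep.
Qed.
Lemma D_one (f : H -> H -> CC) : bilin f -> \sum_(p <- D 1) f p.1 p.2 = f 1 1.
Proof.
move=> hf; case: hh => [[_ _ h1 _] _ _ _].
by rewrite (h1 f hf) big_seq1.
Qed.
Lemma coassoc (f : H -> H -> H -> CC) : trilin f -> forall x,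
  \sum_(p <- D x) \sum_(q <- D p.1) f q.1 q.2 p.2 =
  \sum_(p <- D x) \sum_(q <- D p.2) f p.1 q.1 q.2.
Proof.
move=> hf x; case: hh => [[_ _ _ hA] _ _ _].
have := hA x f hf; rewrite /cop3 !big_allpairs_dep /=; exact.
Qed.
Lemma counitL_f (g : H -> CC) x : linC g -> \sum_(p <- D x) e p.1 * g p.2 = g x.
Proof.
move=> hg; rewrite -[in RHS](counitL x) (linC_sum hg).
by apply: eq_bigr => p _; rewrite (linCZ hg).
Qed.
Lemma counitR_f (g : H -> CC) x : linC g -> \sum_(p <- D x) e p.2 * g p.1 = g x.
Proof.
move=> hg; rewrite -[in RHS](counitR x) (linC_sum hg).
by apply: eq_bigr => p _; rewrite (linCZ hg).
Qed.
Lemma antiL_f (g : H -> CC) x : linC g -> \sum_(p <- D x) g (S p.1 * p.2) = e x * g 1.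
Proof. by move=> hg; rewrite -(linC_sum hg) antiL (linCZ hg). Qed.
Lemma antiR_f (g : H -> CC) x : linC g -> \sum_(p <- D x) g (p.1 * S p.2) = e x * g 1.
Proof. by move=> hg; rewrite -(linC_sum hg) antiR (linCZ hg). Qed.
Lemma linC_S (g : H -> CC) : linC g -> linC (fun x => g (S x)).
Proof. move=> hg; exact: (linC_comp S_lin hg). Qed.
End HopfL.

Lemma linmap_id (U : lmodType CC) : linmap (fun u : U => u).
Proof. by []. Qed.
Lemma linmap_mulr' (B : algType CC) (U : lmodType CC) (m : U -> B) z :
  linmap m -> linmap (fun u => m u * z).
Proof. by move=> hm a u u'; rewrite hm mulrDl scalerAl. Qed.
Lemma linmap_mull' (B : algType CC) (U : lmodType CC) (m : U -> B) z :
  linmap m -> linmap (fun u => z * m u).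
Proof. by move=> hm a u u'; rewrite hm mulrDr scalerAr. Qed.
Lemma linmap_S (B : algType CC) (hs : HopfStr B) (U : lmodType CC) (m : U -> B) :
  is_hopf hs -> linmap m -> linmap (fun u => anti hs (m u)).
Proof. by move=> hh hm a u u'; rewrite hm (S_lin hh). Qed.
Lemma linC_eps (B : algType CC) (hs : HopfStr B) (U : lmodType CC) (m : U -> B) :
  is_hopf hs -> linmap m -> linC (fun u => eps hs (m u)).
Proof. move=> hh hm; exact: (linC_comp hm (eps_lin hh)). Qed.
Lemma linC_bil1 (U V W : lmodType CC) (g : U -> V -> CC) (m : W -> U) v :
  bilin g -> linmap m -> linC (fun u => g (m u) v).
Proof. move=> hg hm; exact: (linC_comp hm (bilin1 hg v)). Qed.
Lemma linC_bil2 (U V W : lmodType CC) (g : U -> V -> CC) (m : W -> V) u :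
  bilin g -> linmap m -> linC (fun v => g u (m v)).
Proof. move=> hg hm; exact: (linC_comp hm (bilin2 hg u)). Qed.
Lemma linC_tri1 (U V W X : lmodType CC) (g : U -> V -> W -> CC) (m : X -> U) v w :
  trilin g -> linmap m -> linC (fun u => g (m u) v w).
Proof. by move=> [h _] hm a x y; rewrite hm h. Qed.
Lemma linC_tri2 (U V W X : lmodType CC) (g : U -> V -> W -> CC) (m : X -> V) u w :
  trilin g -> linmap m -> linC (fun v => g u (m v) w).
Proof. by move=> [_ [h _]] hm a x y; rewrite hm h. Qed.
Lemma linC_tri3 (U V W X : lmodType CC) (g : U -> V -> W -> CC) (m : X -> W) u v :
  trilin g -> linmap m -> linC (fun w => g u v (m w)).
Proof. by move=> [_ [_ h]] hm a x y; rewrite hm h. Qed.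

Lemma sum_tmul2 (B : algType CC) (s t : seq (B * B)) (F : B * B -> CC) :
  \sum_(x <- tmul2 s t) F x = \sum_(p <- s) \sum_(q <- t) F (p.1 * q.1, p.2 * q.2).
Proof. by rewrite /tmul2 big_allpairs_dep. Qed.

Lemma xch (I J : Type) (s : seq I) (t : seq J) (F : I -> J -> CC) :
  \sum_(i <- s) \sum_(j <- t) F i j = \sum_(j <- t) \sum_(i <- s) F i j.
Proof. exact: exchange_big. Qed.

Lemma reord (T : Type) (s : seq T) (F : T -> T -> T -> T -> CC) :
  \sum_(p <- s) \sum_(x <- s) \sum_(p' <- s) \sum_(y <- s) F p p' x y =
  \sum_(y <- s) \sum_(x <- s) \sum_(p <- s) \sum_(p' <- s) F p p' x y.
Proof.
transitivity (\sum_(p <- s) \sum_(x <- s) \sum_(y <- s) \sum_(p' <- s) F p p' x y).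
  by apply: eq_bigr => p _; apply: eq_bigr => x _; exact: xch.
transitivity (\sum_(p <- s) \sum_(y <- s) \sum_(x <- s) \sum_(p' <- s) F p p' x y).
  by apply: eq_bigr => p _; exact: xch.
transitivity (\sum_(y <- s) \sum_(p <- s) \sum_(x <- s) \sum_(p' <- s) F p p' x y).
  exact: xch.
by apply: eq_bigr => y _; exact: xch.
Qed.

Section LinMap.
Variables (U V : lmodType CC) (m : U -> V).
Hypothesis hm : linmap m.
Lemma linmap0 : m 0 = 0.
Proof.
have E := hm 1 0 0; rewrite scale1r addr0 scale1r in E.
apply: (addIr (m 0)); rewrite add0r; exact: esym E.
Qed.
Lemma linmapD u u' : m (u + u') = m u + m u'.
Proof. by have := hm 1 u u'; rewrite !scale1r. Qed.
Lemma linmapZ a u : m (a *: u) = a *: m u.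
Proof. by have := hm a u 0; rewrite !addr0 linmap0 addr0. Qed.
Lemma linmapB u u' : m (u - u') = m u - m u'.
Proof. by rewrite linmapD -scaleN1r linmapZ scaleN1r. Qed.
Lemma linmap_sum (I : Type) (s : seq I) (P : pred I) (F : I -> U) :
  m (\sum_(i <- s | P i) F i) = \sum_(i <- s | P i) m (F i).
Proof. exact: (big_morph m linmapD linmap0). Qed.
End LinMap.

Section Pair.
Variables (H A : algType CC) (hH : HopfStr H) (hA : HopfStr A) (pr : H -> A -> CC).
Hypotheses (hhH : is_hopf hH) (hhA : is_hopf hA) (hp : hopf_pairing hH hA pr)
  (nd : nondegenerate_pairing pr).
Variable R : seq (H * H).
Hypothesis qt : quasitriangular hH R.
Local Notation DH := (cop hH).
Local Notation DA := (cop hA).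
Local Notation eH := (eps hH).
Local Notation eA := (eps hA).
Local Notation SH := (anti hH).
Local Notation SA := (anti hA).

Lemma prL c : linC (fun x => pr x c).
Proof. by case: hp => [[h1 h2] _ _ _ _] a u u'; apply: h1. Qed.
Lemma prR x : linC (pr x).
Proof. by case: hp => [[h1 h2] _ _ _ _] a u u'; apply: h2. Qed.
Lemma prM h g a : pr (h * g) a = \sum_(q <- DA a) pr h q.1 * pr g q.2.
Proof. by case: hp => _ h1 _ _ _. Qed.
Lemma prMr h a b : pr h (a * b) = \sum_(q <- DH h) pr q.1 a * pr q.2 b.
Proof. by case: hp => _ _ h1 _ _. Qed.
Lemma pr1l a : pr 1 a = eA a.
Proof. by case: hp => _ _ _ [h1 _] _. Qed.
Lemma pr1r h : pr h 1 = eH h.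
Proof. by case: hp => _ _ _ [_ h1] _. Qed.
Lemma prS h a : pr (SH h) a = pr h (SA a).
Proof. by case: hp => _ _ _ _ h1. Qed.
Lemma prM3 x y z a : pr (x * y * z) a =
  \sum_(t <- cop3 hA a) pr x t.1.1 * pr y t.1.2 * pr z t.2.
Proof.
rewrite /cop3 big_allpairs_dep prM /=; apply: eq_bigr => q _.
by rewrite prM mulr_suml.
Qed.
Lemma linC_prl c (U : lmodType CC) (m : U -> H) : linmap m -> linC (fun u => pr (m u) c).
Proof. move=> hm; exact: (linC_comp hm (prL c)). Qed.
Lemma linC_prr x (U : lmodType CC) (m : U -> A) : linmap m -> linC (fun u => pr x (m u)).
Proof. move=> hm; exact: (linC_comp hm (prR x)). Qed.

Lemma sepH x y : (forall c, pr x c = pr y c) -> x = y.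
Proof.
move=> hxy; apply/eqP; rewrite -subr_eq0; apply/eqP.
case: nd => h _; apply: h => c; by rewrite (linCB (prL c)) hxy subrr.
Qed.
Lemma sepA a b : (forall h, pr h a = pr h b) -> a = b.
Proof.
move=> hxy; apply/eqP; rewrite -subr_eq0; apply/eqP.
case: nd => _ h; apply: h => c; by rewrite (linCB (prR c)) hxy subrr.
Qed.

Ltac linmap_t := repeat first [ exact: linmap_id | apply: linmap_mulr' | apply: linmap_mull'
   | apply: linmap_S; first exact: hhH | apply: linmap_S; first exact: hhA ].
Ltac linC_t := repeat first [ apply: linC_sumF => ? | apply: linC_add | apply: linC_cst0
   | apply: linC_scar | apply: linC_scal
   | apply: linC_prl | apply: linC_prr | apply: linC_eps; first exact: hhH
   | apply: linC_eps; first exact: hhA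
   | apply: linC_bil1; first eassumption | apply: linC_bil2; first eassumption
   | apply: linC_tri1; first eassumption | apply: linC_tri2; first eassumption
   | apply: linC_tri3; first eassumption | linmap_t ].
Ltac bilin_t := apply: bilinP => [?|?]; linC_t.
Ltac trilin_t := apply: trilinP => [? ?|? ?|? ?]; linC_t.

Lemma QT1 (f : H -> H -> H -> CC) : trilin f ->
  \sum_(p <- R) \sum_(q <- DH p.1) f q.1 q.2 p.2 =
  \sum_(p <- R) \sum_(q <- R) f p.1 q.1 (p.2 * q.2).
Proof. by move=> hf; case: qt => _ h _; have := h f hf; rewrite !big_allpairs_dep. Qed.
Lemma QT2 (f : H -> H -> H -> CC) : trilin f ->
  \sum_(p <- R) \sum_(q <- DH p.2) f p.1 q.1 q.2 =
  \sum_(p <- R) \sum_(q <- R) f (p.1 * q.1) q.2 p.2.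
Proof. by move=> hf; case: qt => _ _ h; have := h f hf; rewrite !big_allpairs_dep. Qed.

Lemma E1 (g : H -> H -> CC) : bilin g ->
  \sum_(p <- R) g p.1 p.2 = \sum_(p <- R) \sum_(q <- R) eH p.1 * g q.1 (p.2 * q.2).
Proof.
move=> hg; rewrite -(QT1 (f := fun x y z => eH x * g y z)); last by trilin_t.
apply: eq_bigr => p _; rewrite (counitL_f hhH (g := fun y => g y p.2)) //; linC_t.
Qed.
Lemma E2 (g : H -> H -> CC) : bilin g ->
  \sum_(p <- R) g p.1 p.2 = \sum_(p <- R) \sum_(q <- R) g (p.1 * q.1) q.2 * eH p.2.
Proof.
move=> hg; rewrite -(QT2 (f := fun x y z => g x y * eH z)); last by trilin_t.
apply: eq_bigr => p _; under eq_bigr do rewrite mulrC; rewrite (counitR_f hhH (g := fun y => g p.1 y)) //; linC_t.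
Qed.

Lemma U1 : \sum_(p <- R) eH p.1 *: p.2 = 1.
Proof.
case: qt => [[Ri [hRRi _ _]] _ _].
apply: sepH => c.
rewrite (linC_sum (prL c)); under eq_bigr do rewrite (linCZ (prL c)).
pose g x y := \sum_(r <- Ri) eH (x * r.1) * pr (y * r.2) c.
have hg : bilin g by rewrite /g; bilin_t.
have L : \sum_(p <- R) g p.1 p.2 = pr 1 c.
  have := hRRi (fun x y => eH x * pr y c) ltac:(bilin_t).
  by rewrite /tmul2 big_allpairs_dep big_seq1 /= eps1 // mul1r => <-.
rewrite -L (E1 hg); apply: eq_bigr => p _; rewrite /g -big_distrr /=; apply: congr1.
have := hRRi (fun x y => eH x * pr (p.2 * y) c) ltac:(bilin_t).
rewrite /tmul2 big_allpairs_dep big_seq1 /= eps1 // mul1r mulr1 => <-.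
by apply: eq_bigr => q _; apply: eq_bigr => r _; rewrite mulrA.
Qed.

Lemma U2 : \sum_(p <- R) eH p.2 *: p.1 = 1.
Proof.
case: qt => [[Ri [hRRi _ _]] _ _].
apply: sepH => c.
rewrite (linC_sum (prL c)); under eq_bigr do rewrite (linCZ (prL c)).
pose g x y := \sum_(r <- Ri) pr (x * r.1) c * eH (y * r.2).
have hg : bilin g by rewrite /g; bilin_t.
have L : \sum_(p <- R) g p.1 p.2 = pr 1 c.
  have := hRRi (fun x y => pr x c * eH y) ltac:(bilin_t).
  by rewrite /tmul2 big_allpairs_dep big_seq1 /= eps1 // mulr1 => <-.
rewrite -L (E2 hg); apply: eq_bigr => p _; rewrite /g -big_distrl /= [RHS]mulrC; apply: congr1.
have := hRRi (fun x y => pr (p.1 * x) c * eH y) ltac:(bilin_t).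
rewrite /tmul2 big_allpairs_dep big_seq1 /= eps1 // mulr1 mulr1 => <-.
by apply: eq_bigr => q _; apply: eq_bigr => r _; rewrite mulrA.
Qed.

Lemma L1 (G : H -> H -> CC) h : bilin G ->
  \sum_(p <- R) \sum_(k <- DH h) G (p.1 * k.1) (p.2 * k.2) =
  \sum_(k <- DH h) \sum_(p <- R) G (k.2 * p.1) (k.1 * p.2).
Proof.
move=> hG; case: qt => [[Ri [_ hRiR hc]] _ _].
have := hc h (fun x y => \sum_(p <- R) G (x * p.1) (y * p.2)) ltac:(bilin_t).
rewrite big_map /= => ->.
rewrite !sum_tmul2 /=.
apply: eq_bigr => p _; apply: eq_bigr => k _.
have := hRiR (fun x y => G (p.1 * k.1 * x) (p.2 * k.2 * y)) ltac:(bilin_t).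
rewrite /tmul2 big_allpairs_dep big_seq1 /= !mulr1 => <-.
by apply: eq_bigr => r _; apply: eq_bigr => q _; rewrite !mulrA.
Qed.

Lemma commQ (G : H -> H -> CC) h : bilin G ->
  \sum_(k <- DH h) \sum_(p <- R) \sum_(q <- R) G (k.1 * (p.2 * q.1)) (k.2 * (p.1 * q.2)) =
  \sum_(k <- DH h) \sum_(p <- R) \sum_(q <- R) G (p.2 * q.1 * k.1) (p.1 * q.2 * k.2).
Proof.
move=> hG.
transitivity (\sum_(q <- R) \sum_(k <- DH h) \sum_(p <- R)
                G (k.1 * p.2 * q.1) (k.2 * p.1 * q.2)).
  under eq_bigr do rewrite xch /=.
  rewrite xch /=.
  by apply: eq_bigr => q _; apply: eq_bigr => k _; apply: eq_bigr => p _; rewrite !mulrA.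
transitivity (\sum_(q <- R) \sum_(p <- R) \sum_(k <- DH h)
                G (p.2 * k.2 * q.1) (p.1 * k.1 * q.2)).
  apply: eq_bigr => q _.
  have := L1 h (G := fun x y => G (y * q.1) (x * q.2)) ltac:(bilin_t).
  by move=> ->.
transitivity (\sum_(p <- R) \sum_(q <- R) \sum_(k <- DH h)
                G (p.2 * (q.1 * k.1)) (p.1 * (q.2 * k.2))).
  rewrite xch /=.
  apply: eq_bigr => p _; rewrite xch /=.
  have := L1 h (G := fun x y => G (p.2 * x) (p.1 * y)) ltac:(bilin_t).
  move=> ->.
  by apply: eq_bigr => k _; apply: eq_bigr => q _; rewrite !mulrA.
under eq_bigr do rewrite xch /=.
rewrite xch /=.
by apply: eq_bigr => k _; apply: eq_bigr => p _; apply: eq_bigr => q _; rewrite !mulrA.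
Qed.

Definition Qs (G : H -> H -> CC) :=
  \sum_(p <- R) \sum_(q <- R) G (p.2 * q.1) (p.1 * q.2).
Lemma Qs_ext G G' : (forall X Y, G X Y = G' X Y) -> Qs G = Qs G'.
Proof. by move=> e; apply: eq_bigr => p _; apply: eq_bigr => q _. Qed.
Lemma Qs_sum (I : Type) (s : seq I) (G : I -> H -> H -> CC) :
  Qs (fun X Y => \sum_(i <- s) G i X Y) = \sum_(i <- s) Qs (G i).
Proof.
rewrite /Qs; under eq_bigr do rewrite xch; rewrite xch.
by apply: eq_bigr => i _; rewrite xch.
Qed.
Lemma linC_Qs (U : lmodType CC) (G : U -> H -> H -> CC) :
  (forall X Y, linC (fun u => G u X Y)) -> linC (fun u => Qs (G u)).
Proof. move=> hG; rewrite /Qs; apply: linC_sumF => p; apply: linC_sumF => q; exact: hG. Qed.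
Lemma D_lin' (B : algType CC) (hs : HopfStr B) (F : B * B -> CC) :
  is_hopf hs -> bilin (fun a b => F (a, b)) -> linC (fun z => \sum_(p <- cop hs z) F p).
Proof.
move=> hh hF.
have E : forall z, \sum_(p <- cop hs z) F p = \sum_(p <- cop hs z) F (p.1, p.2).
  by move=> z; apply: eq_bigr => -[].
move=> a u u'; rewrite !E; exact: (D_lin hh hF).
Qed.

Ltac lin_t := repeat first [ apply: linC_sumF => ? | apply: linC_add | apply: linC_cst0
   | apply: linC_scar | apply: linC_scal
   | apply: linC_prl | apply: linC_prr | apply: linC_eps; first exact: hhH
   | apply: linC_eps; first exact: hhA
   | apply: linC_Qs => ? ? /=
   | apply: D_lin'; first exact: hhH
   | apply: D_lin'; first exact: hhA
   | apply: bilinP => [?|?] /=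
   | apply: trilinP => [? ?|? ?|? ?] /=
   | apply: linC_bil1; first eassumption | apply: linC_bil2; first eassumption
   | apply: linC_tri1; first eassumption | apply: linC_tri2; first eassumption
   | apply: linC_tri3; first eassumption | linmap_t ].

Lemma adQ_pt (F : H -> H -> CC) k1 k2 X Y : bilin F ->
  F (SH k1 * X * k2) Y =
  \sum_(n <- DH k2) \sum_(o <- DH n.1) F (SH k1 * X * o.1) (Y * (o.2 * SH n.2)).
Proof.
move=> hF.
rewrite (coassoc hhH (f := fun x y z => F (SH k1 * X * x) (Y * (y * SH z)))); last by lin_t.
rewrite -[LHS](counitR_f hhH (g := fun w => F (SH k1 * X * w) Y)); last by lin_t.
apply: eq_bigr => n _.
rewrite (antiR_f hhH (g := fun w => F (SH k1 * X * n.1) (Y * w))) ?mulr1 //; lin_t.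
Qed.

Lemma adQ (F : H -> H -> CC) h : bilin F ->
  \sum_(k <- DH h) Qs (fun X Y => F (SH k.1 * X * k.2) Y) =
  \sum_(k <- DH h) Qs (fun X Y => F X (k.1 * Y * SH k.2)).
Proof.
move=> hF.
pose Psi a b c d := Qs (fun X Y => F (SH a * (b * X)) (c * Y * SH d)).
transitivity (\sum_(k <- DH h) \sum_(n <- DH k.2) \sum_(o <- DH n.1) Psi k.1 o.1 o.2 n.2).
  apply: eq_bigr => k _.
  rewrite (Qs_ext (fun X Y => adQ_pt k.1 k.2 X Y hF)) Qs_sum.
  apply: eq_bigr => n _; rewrite Qs_sum.
  transitivity (\sum_(o <- DH n.1) Qs (fun X Y => F (SH k.1 * (X * o.1)) (Y * o.2 * SH n.2))).
    by apply: eq_bigr => o _; apply: Qs_ext => X Y; rewrite !mulrA.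
  have hG : bilin (fun x y => F (SH k.1 * x) (y * SH n.2)) by lin_t.
  symmetry; exact: (commQ n.1 hG).
transitivity (\sum_(k <- DH h) \sum_(n <- DH k.2) \sum_(o <- DH n.2) Psi k.1 n.1 o.1 o.2).
  apply: eq_bigr => k _.
  by rewrite (coassoc hhH (f := fun x y z => Psi k.1 x y z)) //; rewrite /Psi; lin_t.
rewrite -(coassoc hhH (f := fun x y z => \sum_(o <- DH z) Psi x y o.1 o.2)); last first.
  by rewrite /Psi; lin_t.
transitivity (\sum_(u <- DH h) eH u.1 *
   \sum_(o <- DH u.2) Qs (fun X Y => F X (o.1 * Y * SH o.2))).
  apply: eq_bigr => u _; rewrite xch big_distrr /=; apply: eq_bigr => o _.
  transitivity (\sum_(v <- DH u.1)
     (fun w => Qs (fun X Y => F (w * X) (o.1 * Y * SH o.2))) (SH v.1 * v.2)).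
    by apply: eq_bigr => v _; apply: Qs_ext => X Y; rewrite !mulrA.
  rewrite (antiL_f hhH (g := fun w => Qs (fun X Y => F (w * X) (o.1 * Y * SH o.2)))) /=; last by lin_t.
  by apply: congr1; apply: Qs_ext => X Y; rewrite mul1r.
by rewrite (counitL_f hhH (g := fun z => \sum_(o <- DH z) Qs (fun X Y => F X (o.1 * Y * SH o.2)))) //; lin_t.
Qed.

Lemma core_AA a b c :
  Qs (fun X Y => pr X a * pr Y (b * c)) =
  \sum_(p <- R) \sum_(q <- R) pr (p.1 * q.2) b * Qs (fun X Y => pr (p.2 * X * q.1) a * pr Y c).
Proof.
pose E (p p' x y : H * H) :=
  pr (p.2 * p'.2 * (y.1 * x.1)) a * pr (p.1 * x.2) b * pr (p'.1 * y.2) c.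
transitivity (\sum_(y <- R) \sum_(x <- R) \sum_(p <- R) \sum_(p' <- R) E p p' x y).
  transitivity (\sum_(q <- R) \sum_(l <- DH q.2) \sum_(p <- R) \sum_(p' <- R)
     pr (p.2 * p'.2 * q.1) a * pr (p.1 * l.1) b * pr (p'.1 * l.2) c); last first.
    have hf : trilin (fun x y z => \sum_(p <- R) \sum_(p' <- R)
       pr (p.2 * p'.2 * x) a * pr (p.1 * y) b * pr (p'.1 * z) c) by lin_t.
    exact: (QT2 hf).
  rewrite /Qs.
  transitivity (\sum_(p <- R) \sum_(q <- R) \sum_(k <- DH p.1) \sum_(l <- DH q.2)
     pr (p.2 * q.1) a * pr (k.1 * l.1) b * pr (k.2 * l.2) c).
    apply: eq_bigr => p _; apply: eq_bigr => q _.
    rewrite prMr (D_mul hhH (f := fun x y => pr x b * pr y c)) /=; last by lin_t.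
    rewrite big_distrr; apply: eq_bigr => k _; rewrite big_distrr; apply: eq_bigr => l _ /=.
    by rewrite mulrA.
  rewrite [LHS]xch; apply: eq_bigr => q _.
  under eq_bigr do rewrite xch.
  rewrite [LHS]xch.
  apply: eq_bigr => l _.
  have hf : trilin (fun x y z => pr (z * q.1) a * pr (x * l.1) b * pr (y * l.2) c) by lin_t.
  exact: (QT1 hf).
symmetry.
transitivity (\sum_(p <- R) \sum_(x <- R) \sum_(p' <- R) \sum_(y <- R) E p p' x y).
  apply: eq_bigr => p _; apply: eq_bigr => x _; rewrite /Qs big_distrr.
  apply: eq_bigr => p' _; rewrite big_distrr; apply: eq_bigr => y _ /=.
  by rewrite /E !mulrA (mulrC (pr (p.1 * x.2) b)).
exact: reord.
Qed.

Local Notation Q := (Qmap pr R).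

Lemma Qs_scal k G : Qs (fun X Y => k * G X Y) = k * Qs G.
Proof.
rewrite /Qs big_distrr; apply: eq_bigr => p _; rewrite big_distrr.
by apply: eq_bigr.
Qed.
Lemma Qs_add G G' : Qs (fun X Y => G X Y + G' X Y) = Qs G + Qs G'.
Proof.
rewrite /Qs -big_split; apply: eq_bigr => p _; rewrite -big_split.
by apply: eq_bigr.
Qed.

Lemma prQm (m : H -> H) a c : linmap m ->
  pr (m (Q a)) c = Qs (fun X Y => pr X a * pr (m Y) c).
Proof.
move=> hm; rewrite /Qmap (linmap_sum hm) (linC_sum (prL c)); apply: eq_bigr => p _.
rewrite (linmap_sum hm) (linC_sum (prL c)); apply: eq_bigr => q _.
by rewrite (linmapZ hm) (linCZ (prL c)).
Qed.
Lemma prQ a c : pr (Q a) c = Qs (fun X Y => pr X a * pr Y c).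
Proof. exact: (prQm a c (@linmap_id H)). Qed.

Lemma QmapL : linmap Q.
Proof.
move=> k a a'; apply: sepH => c.
rewrite prQ (linCD (prL c)) (linCZ (prL c)) !prQ -Qs_scal -Qs_add.
apply: Qs_ext => X Y; rewrite (prR X); ring.
Qed.

Lemma epsQ a : eH (Q a) = eA a.
Proof.
rewrite /Qmap (linC_sum (eps_lin hhH)).
transitivity (pr ((\sum_(p <- R) eH p.1 *: p.2) * (\sum_(q <- R) eH q.2 *: q.1)) a); last first.
  by rewrite U1 U2 mulr1 pr1l.
rewrite mulr_suml (linC_sum (prL a)); apply: eq_bigr => p _.
rewrite (linC_sum (eps_lin hhH)) mulr_sumr (linC_sum (prL a)); apply: eq_bigr => q _.
rewrite (linCZ (eps_lin hhH)) -scalerAl -scalerAr !(linCZ (prL a)) (epsM hhH).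
ring.
Qed.

Lemma Q1 : Q 1 = 1.
Proof.
transitivity ((\sum_(p <- R) eH p.2 *: p.1) * (\sum_(q <- R) eH q.1 *: q.2)); last first.
  by rewrite U1 U2 mulr1.
rewrite /Qmap mulr_suml; apply: eq_bigr => p _.
rewrite mulr_sumr; apply: eq_bigr => q _.
by rewrite pr1r (epsM hhH) -scalerAl -scalerAr scalerA.
Qed.

Lemma prXact X h a : pr X (actHA hA pr h a) = \sum_(k <- DH h) pr (SH k.1 * X * k.2) a.
Proof.
rewrite /actHA (linC_sum (prR X)).
transitivity (\sum_(t <- cop3 hA a) \sum_(k <- DH h)
    pr k.1 (SA t.1.1) * pr k.2 t.2 * pr X t.1.2).
  by apply: eq_bigr => t _; rewrite (linCZ (prR X)) prMr big_distrl.
rewrite xch; apply: eq_bigr => k _; rewrite prM3; apply: eq_bigr => t _.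
by rewrite -prS mulrAC.
Qed.

Lemma QactH h a : Q (actHA hA pr h a) = actHH hH h (Q a).
Proof.
apply: sepH => c.
rewrite prQ /actHH (linC_sum (prL c)).
rewrite (Qs_ext (G' := fun X Y => \sum_(k <- DH h) pr (SH k.1 * X * k.2) a * pr Y c)); last first.
  by move=> X Y; rewrite prXact big_distrl.
rewrite Qs_sum.
have hF : bilin (fun x y => pr x a * pr y c) by lin_t.
rewrite (adQ h hF); apply: eq_bigr => k _.
by rewrite (prQm a c (m := fun x => k.1 * x * SH k.2)) //; linmap_t.
Qed.

Lemma QactA b a : Q (actAA hA pr R b a) = actAH hH pr b (Q a).
Proof.
rewrite /actAA /actAH (linmapB QmapL) (linmapZ QmapL) Q1; apply: (congr1 (fun z => z - _)).
apply: sepH => c.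
rewrite [RHS](linC_sum (prL c)).
transitivity (pr (Q a) (b * c)); last first.
  by rewrite prMr; apply: eq_bigr => k _; rewrite (linCZ (prL c)).
rewrite [RHS]prQ core_AA (linmap_sum QmapL) (linC_sum (prL c)).
apply: eq_bigr => p _; rewrite (linmap_sum QmapL) (linC_sum (prL c)).
apply: eq_bigr => q _; rewrite (linmap_sum QmapL) (linC_sum (prL c)).
rewrite (Qs_ext (G' := fun X Y => \sum_(t <- cop3 hA a)
   pr p.2 t.1.1 * pr q.1 t.2 * (pr X t.1.2 * pr Y c))); last first.
  move=> X Y; rewrite prM3 mulr_suml; apply: eq_bigr => t _; ring.
rewrite Qs_sum mulr_sumr; apply: eq_bigr => t _.
by rewrite Qs_scal (linmapZ QmapL) (linCZ (prL c)) prQ !mulrA.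
Qed.

Lemma main_sec : bijective Q ->
  [/\ (forall a, eps hA a = 0 -> eps hH (Qmap pr R a) = 0),
      (forall x, eps hH x = 0 -> exists2 a, eps hA a = 0 & Qmap pr R a = x),
      (forall (h : H) (a : A), eps hA a = 0 ->
         Qmap pr R (actHA hA pr h a) = actHH hH h (Qmap pr R a)),
      (forall (b a : A), eps hA a = 0 ->
         Qmap pr R (actAA hA pr R b a) = actAH hH pr b (Qmap pr R a)) &
      (forall W : H -> Prop, double_subrepH hH pr W <->
         exists V : A -> Prop, double_subrepA hA pr R V /\
           (forall x, W x <-> exists2 a, V a & Qmap pr R a = x))].
Proof.
case=> Qi QiK KQi.
split.
- by move=> a ea; rewrite epsQ.
- move=> x ex; exists (Qi x); last exact: KQi.
  by rewrite -epsQ KQi.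
- move=> h a _; exact: QactH.
- move=> b a _; exact: QactA.
move=> W; split.
  case=> [[W0 Wc] We Wh Wb]; exists (fun a => W (Q a)); split; last first.
    move=> x; split; first by move=> Wx; exists (Qi x); rewrite ?KQi.
    by case=> a Wa <-.
  split.
  - split; first by rewrite (linmap0 QmapL).
    by move=> c x y Wx Wy; rewrite QmapL; exact: Wc.
  - by move=> a Wa; rewrite -epsQ; exact: We.
  - by move=> h a Wa; rewrite QactH; exact: Wh.
  - by move=> b a Wa; rewrite QactA; exact: Wb.
case=> V [[[V0 Vc] Ve Vh Vb] hW].
split.
- split; first by apply/hW; exists 0 => //; exact: (linmap0 QmapL).
  move=> c x y /hW [a Va <-] /hW [a' Va' <-]; apply/hW; exists (c *: a + a').
    exact: Vc.
  exact: QmapL.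
- by move=> x /hW [a Va <-]; rewrite epsQ; exact: Ve.
- move=> h x /hW [a Va <-]; apply/hW; exists (actHA hA pr h a); first exact: Vh.
  exact: QactH.
- move=> b x /hW [a Va <-]; apply/hW; exists (actAA hA pr R b a); first exact: Vb.
  exact: QactA.
Qed.
End Pair.

Theorem lemma4p1 (H A : algType CC) (hH : HopfStr H) (hA : HopfStr A)
  (R : seq (H * H)) (pairing : H -> A -> CC) :
  is_hopf hH -> is_hopf hA -> quasitriangular hH R ->
  hopf_pairing hH hA pairing -> nondegenerate_pairing pairing ->
  bijective (Qmap pairing R) ->
  [/\ (forall a, eps hA a = 0 -> eps hH (Qmap pairing R a) = 0),
      (forall x, eps hH x = 0 -> exists2 a, eps hA a = 0 & Qmap pairing R a = x),
      (forall (h : H) (a : A), eps hA a = 0 ->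
         Qmap pairing R (actHA hA pairing h a) = actHH hH h (Qmap pairing R a)),
      (forall (b a : A), eps hA a = 0 ->
         Qmap pairing R (actAA hA pairing R b a) = actAH hH pairing b (Qmap pairing R a)) &
      (forall W : H -> Prop, double_subrepH hH pairing W <->
         exists V : A -> Prop, double_subrepA hA pairing R V /\
           (forall x, W x <-> exists2 a, V a & Qmap pairing R a = x))].
Proof.
move=> hhH _ qt hp nd hb.
exact: (main_sec hhH hp nd qt hb).
Qed.
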